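(* Let $K$ be a non-archimedean local field and $G$ a subgroup of $\mathrm{SL}_n(K)$. Suppose either $\mathrm{char}(K)=0$, or $\mathrm{char}(K)=p>0$ and $G$ contains no elements of order $p$. Then $G$ is discrete if and only if every cyclic subgroup of $G$ is discrete.
   Context: A non-archimedean local field is a finite extension of $\mathbb{Q}_p$ or $\mathbb{F}_q((t))$. $\mathrm{SL}_n(K)$ has the subspace topology from $K^{n^2}$. *)

(* Defs.v *)
From mathcomp Require Import all_boot all_order all_algebra.
From mathcomp Require Import reals.
Set Implicit Arguments. Unset Strict Implicit. Unset Printing Implicit Defensive.
Import Order.TTheory GRing.Theory Num.Theory.
Local Open Scope ring_scope.

(* We use the
   classical characterisation: K carries a non-trivial ultrametric absolute
   value for which the closed unit ball is (sequentially) compact, i.e. K is a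
   non-discrete, locally compact, non-archimedean valued field.  These are
   exactly the finite extensions of Q_p and F_q((t)). *)
Definition nonarch_local_field (R : realType) (K : fieldType) (v : K -> R) : Prop :=
  [/\ (forall x : K, 0 <= v x) /\ (forall x : K, v x = 0 <-> x = 0),
      (forall x y : K, v (x * y) = v x * v y),
      (forall x y : K, v (x + y) <= Num.max (v x) (v y)),
      (exists x : K, v x != 0 /\ v x != 1) &
      (forall u : nat -> K, (forall m, v (u m) <= 1) ->
         exists (phi : nat -> nat) (l : K),
           (forall m, (phi m < phi m.+1)%N) /\ v l <= 1 /\
           (forall e : R, 0 < e -> exists N, forall m, (N <= m)%N ->
                v (u (phi m) - l) < e))].

Definition is_subgroup_SL (K : fieldType) (n : nat) (G : 'M[K]_n -> Prop) : Prop :=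
  [/\ G 1%:M,
      (forall g, G g -> \det g = 1),
      (forall g h, G g -> G h -> G (g *m h)) &
      (forall g, G g -> G (invmx g))].

Definition mxpow (K : fieldType) (n : nat) (g : 'M[K]_n) (m : nat) : 'M[K]_n :=
  iter m (mulmx g) 1%:M.

Definition cyclic_sub (K : fieldType) (n : nat) (g : 'M[K]_n) : 'M[K]_n -> Prop :=
  fun x => exists m : nat, x = mxpow g m \/ x = mxpow (invmx g) m.

(* Discreteness of a set of matrices S in the subspace topology of K^{n^2},
   K topologised by v (product topology = entrywise sup-metric):
   every point of S is isolated in S. *)
Definition mx_discrete (R : realType) (K : fieldType) (v : K -> R) (n : nat)
    (S : 'M[K]_n -> Prop) : Prop :=
  forall g, S g -> exists2 e : R, 0 < e &
    forall h, S h -> (forall i j, v (h i j - g i j) < e) -> h = g.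

Definition has_order (K : fieldType) (n : nat) (g : 'M[K]_n) (p : nat) : Prop :=
  mxpow g p = 1%:M /\ (forall k, (0 < k < p)%N -> mxpow g k <> 1%:M).

(* Main.v *)
Require Import Defs.
From mathcomp Require Import all_boot all_order all_algebra.
From mathcomp Require Import reals.
From mathcomp Require Import ring lra.
Import Order.TTheory GRing.Theory Num.Theory.
Set Implicit Arguments. Unset Strict Implicit.
Local Open Scope ring_scope.


Section Val.
Variables (R : realType) (K : fieldType) (v : K -> R).
Hypothesis hv : nonarch_local_field v.

Lemma v_ge0 x : 0 <= v x. Proof. by case: hv => [[]]. Qed.
Lemma v_eq0 x : v x = 0 <-> x = 0. Proof. by case: hv => [[]]. Qed.
Lemma vM x y : v (x * y) = v x * v y. Proof. by case: hv. Qed.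
Lemma vD x y : v (x + y) <= Num.max (v x) (v y). Proof. by case: hv. Qed.
Lemma v0 : v 0 = 0. Proof. exact/v_eq0. Qed.
Lemma v1 : v 1 = 1.
Proof.
have h := vM 1 1; rewrite mul1r in h.
have n0 : v 1 != 0 by apply/eqP => /v_eq0/eqP; rewrite oner_eq0.
by apply: (mulfI n0); rewrite mulr1 -h.
Qed.
Lemma vN x : v (- x) = v x.
Proof.
have hN1 : v (-1) = 1.
  have h := vM (-1) (-1); rewrite mulrNN mul1r v1 in h.
  have := v_ge0 (-1); move: h; set a := v (-1) => h ha.
  have : (a - 1) * (a + 1) = 0 by rewrite mulrDr mulr1 mulrBl mul1r -h; ring.
  move/eqP; rewrite mulf_eq0 => /orP[/eqP|/eqP] e.
    by apply/eqP; rewrite -subr_eq0 e.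
  have : 0 < a + 1 by rewrite ltr_wpDl.
  by rewrite e ltxx.
by rewrite -mulN1r vM hN1 mul1r.
Qed.
Lemma vB x y : v (x - y) = v (y - x).
Proof. by rewrite -vN opprB. Qed.
Lemma vD_le x y b : v x <= b -> v y <= b -> v (x + y) <= b.
Proof. by move=> hx hy; apply: le_trans (vD x y) _; rewrite ge_max hx hy. Qed.
Lemma v_sum I (r : seq I) (P : pred I) (F : I -> K) b : 0 <= b ->
  (forall i, P i -> v (F i) <= b) -> v (\sum_(i <- r | P i) F i) <= b.
Proof.
move=> b0 hF; apply: (big_ind (fun x => v x <= b)) => //.
- by rewrite v0.
- by move=> x y; apply: vD_le.
Qed.
Lemma v_nat m : v (m%:R) <= 1.
Proof.
elim: m => [|m IH]; first by rewrite v0.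
by rewrite -addn1 natrD; apply: vD_le => //; rewrite v1.
Qed.
Lemma vMn x m : v (x *+ m) <= v x.
Proof.
rewrite -mulr_natl vM; have := v_nat m; have := v_ge0 x.
by move=> h1 h2; rewrite ler_piMl.
Qed.

Section Norm.
Variable n : nat.
Definition nm (X : 'M[K]_n) : R := \big[Num.max/0]_(ij : 'I_n * 'I_n) v (X ij.1 ij.2).

Lemma nm_ge0 (X : 'M[K]_n) : 0 <= nm X.
Proof.
apply: (big_ind (fun x => 0 <= x)) => //.
  by move=> x y hx _; rewrite le_max hx.
by move=> i _; apply: v_ge0.
Qed.
Lemma nm_ub (X : 'M[K]_n) i j : v (X i j) <= nm X.
Proof. exact: (le_bigmax _ (fun ij : 'I_n * 'I_n => v (X ij.1 ij.2)) (i, j)). Qed.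
Lemma nm_le (X : 'M[K]_n) b : 0 <= b -> (forall i j, v (X i j) <= b) -> nm X <= b.
Proof. by move=> b0 h; apply: bigmax_le => // [[i j]] _; apply: h. Qed.
Lemma nm_att (X : 'M[K]_n) : nm X = 0 \/ exists i j, nm X = v (X i j).
Proof.
rewrite /nm; apply: (big_ind (fun x => x = 0 \/ exists i j, x = v (X i j))).
- by left.
- move=> x y hx hy; case: (leP x y) => _; by [].
- by move=> [i j] _; right; exists i, j.
Qed.
Lemma nm_lt (X : 'M[K]_n) e : 0 < e -> (forall i j, v (X i j) < e) -> nm X < e.
Proof. by move=> e0 h; case: (nm_att X) => [->|[i [j ->]]]. Qed.
Lemma nm_eq0 (X : 'M[K]_n) : nm X = 0 -> X = 0.
Proof.
move=> h; apply/matrixP => i j; rewrite mxE; apply/v_eq0.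
by apply/le_anti; rewrite v_ge0 andbT -h nm_ub.
Qed.
Lemma nmD (X Y : 'M[K]_n) : nm (X + Y) <= Num.max (nm X) (nm Y).
Proof.
apply: nm_le; first by rewrite le_max nm_ge0.
move=> i j; rewrite mxE; apply: vD_le; rewrite le_max nm_ub //; by rewrite orbT.
Qed.
Lemma nmD_le (X Y : 'M[K]_n) b : nm X <= b -> nm Y <= b -> nm (X + Y) <= b.
Proof. by move=> hx hy; apply: le_trans (nmD X Y) _; rewrite ge_max hx hy. Qed.
Lemma nmN (X : 'M[K]_n) : nm (- X) = nm X.
Proof.
apply/le_anti/andP; split; apply: nm_le; rewrite ?nm_ge0 // => i j.
  by rewrite mxE vN nm_ub.
by have := nm_ub (- X) i j; rewrite mxE vN.
Qed.
Lemma nmB (X Y : 'M[K]_n) : nm (X - Y) = nm (Y - X).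
Proof. by rewrite -nmN opprB. Qed.
Lemma nmM (X Y : 'M[K]_n) : nm (X * Y) <= nm X * nm Y.
Proof.
apply: nm_le; first by rewrite mulr_ge0 ?nm_ge0.
move=> i j; rewrite -mulmxE mxE; apply: v_sum; first by rewrite mulr_ge0 ?nm_ge0.
by move=> k _; rewrite vM ler_pM ?v_ge0 ?nm_ub.
Qed.
Lemma nm_sum I (r : seq I) (P : pred I) (F : I -> 'M[K]_n) b : 0 <= b ->
  (forall i, P i -> nm (F i) <= b) -> nm (\sum_(i <- r | P i) F i) <= b.
Proof.
move=> b0 hF; apply: (big_ind (fun x => nm x <= b)) => //.
- by apply: nm_le => // i j; rewrite mxE v0.
- by move=> x y; apply: nmD_le.
Qed.
Lemma nmMn (X : 'M[K]_n) m : nm (X *+ m) <= nm X.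
Proof.
apply: nm_le; first exact: nm_ge0.
by move=> i j; rewrite mulmxnE; apply: le_trans (vMn _ _) (nm_ub _ _ _).
Qed.
Lemma nmMn_p (X : 'M[K]_n) m : nm (X *+ m) <= v (m%:R) * nm X.
Proof.
apply: nm_le; first by rewrite mulr_ge0 ?v_ge0 ?nm_ge0.
move=> i j; rewrite mulmxnE -[X i j *+ m]mulr_natl vM.
by apply: ler_pM; rewrite ?v_ge0 ?nm_ub.
Qed.
Lemma nm1 : nm 1 <= 1.
Proof.
apply: nm_le => // i j; rewrite mxE; case: (i == j) => /=.
  by rewrite v1.
by rewrite v0.
Qed.
Lemma nmX (X : 'M[K]_n) m : nm (X ^+ m) <= nm X ^+ m.
Proof.
elim: m => [|m IH]; first by rewrite expr0 nm1.
rewrite exprS [in X in _ <= X]exprS; apply: le_trans (nmM _ _) _.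
by rewrite ler_pM ?nm_ge0.
Qed.
End Norm.
End Val.


Lemma geom (R : realType) (c e : R) : 0 <= c -> c < 1 -> 0 < e ->
  exists k, c ^+ k < e.
Proof.
move=> c0 c1 e0.
have [->|cn0] := eqVneq c 0; first by exists 1%N; rewrite expr1.
have cp : 0 < c by rewrite lt_def cn0 c0.
set d := c^-1.
have d1 : 1 < d by rewrite /d invf_gt1.
set t := d - 1.
have t0 : 0 < t by rewrite /t subr_gt0.
have bern : forall k, 1 + k%:R * t <= d ^+ k.
  elim=> [|k IH]; first by rewrite mul0r addr0 expr0.
  rewrite exprS -addn1 natrD.
  have h : d * (1 + k%:R * t) <= d * d ^+ k by rewrite ler_pM2l ?(lt_trans ltr01).
  apply: le_trans h.
  have dt : d = t + 1 by rewrite /t subrK.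
  have k0 : 0 <= k%:R * (t * t) :> R by rewrite mulr_ge0 // mulr_ge0 // ltW.
  rewrite dt; nra.
have et0 : 0 <= (e * t)^-1 by rewrite invr_ge0 mulr_ge0 // ltW.
have hk := archi_boundP et0.
set k := Num.bound _ in hk.
exists k.
have dk0 : 0 < d ^+ k by rewrite exprn_gt0 // (lt_trans ltr01).
have -> : c = d^-1 by rewrite /d invrK.
rewrite exprVn -div1r ltr_pdivrMr //.
have := bern k.
rewrite -div1r ltr_pdivrMr in hk; last by rewrite mulr_gt0.
move: hk; set K := k%:R; move=> hk hb.
nra.
Qed.

Section Pow.
Variables (R : realType) (K : fieldType) (v : K -> R).
Hypothesis hv : nonarch_local_field v.
Variable n : nat.
Local Notation nm := (@nm R K v n).

Lemma nm0 : nm 0 = 0.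
Proof.
by apply/le_anti; rewrite (nm_ge0 hv) andbT; apply: nm_le => // i j; rewrite mxE (v0 hv).
Qed.

Lemma mxpowE (g : 'M[K]_n) m : mxpow g m = g ^+ m.
Proof. by elim: m => [|m IH] //=; rewrite /mxpow /= -/(mxpow g m) IH exprS. Qed.

Lemma pow_near (g : 'M[K]_n) : nm (g - 1) <= 1 -> forall m, nm (g ^+ m - 1) <= nm (g - 1).
Proof.
move=> r1; have g1 : nm g <= 1.
  by rewrite -(subrK 1 g); apply: (nmD_le hv) => //; apply: (nm1 hv n).
elim=> [|m IH]; first by rewrite expr0 subrr nm0 // (nm_ge0 hv).
have -> : g ^+ m.+1 - 1 = g * (g ^+ m - 1) + (g - 1).
  by rewrite exprS mulrBr mulr1 addrA subrK.
apply: (nmD_le hv) => //; apply: le_trans (nmM hv _ _) _.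
by rewrite -[X in _ <= X]mul1r ler_pM ?(nm_ge0 hv).
Qed.

Lemma expand (X : 'M[K]_n) p : (X + 1) ^+ p.+2 - 1 =
  X *+ p.+2 + \sum_(i < p.+1) X ^+ i.+2 *+ 'C(p.+2, i.+2).
Proof.
rewrite exprD1n big_ord_recl big_ord_recl /= expr0 bin0 expr1 bin1.
by rewrite [1 + _]addrC addrK.
Qed.

Lemma rest_le (X : 'M[K]_n) p : nm X <= 1 ->
  nm (\sum_(i < p.+1) X ^+ i.+2 *+ 'C(p.+2, i.+2)) <= nm X ^+ 2.
Proof.
move=> r1; apply: (nm_sum hv) => //; first by rewrite exprn_ge0 // (nm_ge0 hv).
move=> i _; apply: le_trans (nmMn hv _ _) _; apply: le_trans (nmX hv _ _) _.
rewrite -addn2 exprD; apply: ler_piMl; first by rewrite exprn_ge0 // (nm_ge0 hv).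
by rewrite exprn_ile1 // (nm_ge0 hv).
Qed.

Lemma contract (g : 'M[K]_n) p : nm (g - 1) <= 1 ->
  nm (g ^+ p.+2 - 1) <= Num.max (v (p.+2)%:R * nm (g - 1)) (nm (g - 1) ^+ 2).
Proof.
move=> r1; rewrite -{1}(subrK 1 g) expand; apply: (nmD_le hv).
  by rewrite le_max (nmMn_p hv).
by rewrite le_max rest_le ?orbT.
Qed.

Lemma torsion (g : 'M[K]_n) p : 0 < v (p.+2)%:R -> nm (g - 1) < v (p.+2)%:R ->
  g ^+ p.+2 = 1 -> g = 1.
Proof.
move=> vp0 rp gp.
have vp1 : v (p.+2)%:R <= 1 by apply: (v_nat hv).
have r1 : nm (g - 1) <= 1 by apply: ltW; apply: lt_le_trans vp1.
have := expand (g - 1) p; rewrite subrK gp subrr => /eqP; rewrite eq_sym addr_eq0 => /eqP E.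
case: (nm_att v (g - 1)) => [/(nm_eq0 hv)/eqP|[i [j rij]]].
  by rewrite subr_eq0 => /eqP.
have : v (((g - 1) *+ p.+2) i j) <= nm (g - 1) ^+ 2.
  by rewrite E mxE (vN hv); apply: le_trans (nm_ub v _ i j) _; apply: rest_le.
rewrite mulmxnE -mulr_natl (vM hv) -rij expr2.
set r := nm (g - 1) in rij rp r1 *; move=> h.
have r0 : 0 <= r by apply: (nm_ge0 hv).
have [r00|rpos] := eqVneq r 0.
  by move/(nm_eq0 hv): r00 => /eqP; rewrite subr_eq0 => /eqP.
have rp0 : 0 < r by rewrite lt_def rpos r0.
have : r * r < v (p.+2)%:R * r by rewrite ltr_pM2r.
by rewrite ltNge h.
Qed.
End Pow.


Section Iter.
Variables (R : realType) (K : fieldType) (v : K -> R).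
Hypothesis hv : nonarch_local_field v.
Variable n : nat.
Local Notation nm := (@nm R K v n).

Lemma iterate (g : 'M[K]_n) p (d : R) : nm (g - 1) <= d -> d <= 1 ->
  forall k, nm (g ^+ (p.+2 ^ k) - 1) <= (Num.max (v (p.+2)%:R) d) ^+ k * nm (g - 1).
Proof.
move=> rd d1; have r1 : nm (g - 1) <= 1 by apply: le_trans d1.
set c := Num.max _ _.
have c0 : 0 <= c by rewrite le_max (v_ge0 hv).
elim=> [|k IH]; first by rewrite expn0 expr1 expr0 mul1r.
rewrite expnSr exprM.
set h := g ^+ (p.+2 ^ k).
have hr : nm (h - 1) <= nm (g - 1) by apply: (pow_near hv).
have h1 : nm (h - 1) <= 1 by apply: le_trans r1.
have rk0 : 0 <= nm (h - 1) by apply: (nm_ge0 hv).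
apply: le_trans (contract hv p h1) _.
apply: (@le_trans _ _ (c * nm (h - 1))).
  rewrite ge_max; apply/andP; split.
    by rewrite ler_wpM2r // le_max lexx.
  rewrite expr2 ler_wpM2r //; apply: le_trans (le_trans hr rd) _.
  by rewrite le_max lexx orbT.
by rewrite exprS -mulrA ler_wpM2l.
Qed.

Lemma order_p (g : 'M[K]_n) q k : prime q -> g ^+ (q ^ k) = 1 -> g <> 1 ->
  exists j, has_order (g ^+ (q ^ j)) q.
Proof.
move=> pq gk g1.
have exP : exists m, (0 < m)%N && (g ^+ m == 1).
  by exists (q ^ k)%N; rewrite expn_gt0 prime_gt0 // gk eqxx.
case: (ex_minnP exP) => m /andP[m0 /eqP gm] mmin.
have dm : (m %| q ^ k)%N.
  have s0 : g ^+ (q ^ k %% m) = 1.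
    by rewrite -gk {2}(divn_eq (q ^ k) m) exprD mulnC exprM gm expr1n mul1r.
  rewrite /dvdn; apply/negPn/negP => sn0.
  have : (m <= q ^ k %% m)%N by apply: mmin; rewrite lt0n sn0 s0 eqxx.
  by rewrite leqNgt ltn_pmod.
case/(dvdn_pfactor _ _ pq): dm => j jk mj.
case: j jk mj => [|j] _ mj.
  by move: gm; rewrite mj expn0 expr1.
exists j; split.
  by rewrite mxpowE -exprM -expnSr -mj.
move=> k' /andP[k0 kq]; rewrite mxpowE -exprM => /eqP e.
have : (m <= q ^ j * k')%N by apply: mmin; rewrite muln_gt0 expn_gt0 prime_gt0 // k0 e.
rewrite mj expnSr leqNgt ltn_pmul2l ?expn_gt0 ?prime_gt0 //. by rewrite kq.
Qed.
End Iter.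


Section Main.
Variables (R : realType) (K : fieldType) (v : K -> R).
Hypothesis hv : nonarch_local_field v.

Lemma small_nat : exists D, (0 < D)%N /\ v D%:R < 1.
Proof.
case: hv => _ _ _ _ /(_ (fun m => m%:R)) /(_ (v_nat hv)) [phi [l [phiI [_ H]]]].
have [N HN] := H 1 ltr01.
exists (phi N.+1 - phi N)%N; split; first by rewrite subn_gt0.
rewrite natrB ?(ltnW (phiI N)) //.
have -> : (phi N.+1)%:R - (phi N)%:R = ((phi N.+1)%:R - l) + - ((phi N)%:R - l) :> K.
  by rewrite opprB addrA subrK.
apply: le_lt_trans (vD hv _ _) _; rewrite gt_max (vN hv) !HN //.
Qed.

Lemma small_prime_aux N : forall D, (D <= N)%N -> (0 < D)%N -> v D%:R < 1 ->
  exists q, prime q /\ v q%:R < 1.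
Proof.
elim: N => [|N IH] D DN D0 hD; first by move: DN D0; rewrite leqn0 => /eqP ->.
have [D1|D1] := leqP D 1.
  have D1E : D = 1%N by apply/eqP; rewrite eqn_leq D1 D0.
  by move: hD; rewrite D1E (v1 hv) ltxx.
have pq := pdiv_prime D1.
have pg := prime_gt1 pq.
have [vq|vq] := ltP (v (pdiv D)%:R) 1; first by exists (pdiv D).
have vq1 : v (pdiv D)%:R = 1 by apply/le_anti; rewrite vq (v_nat hv).
have DE : D = (pdiv D * (D %/ pdiv D))%N by rewrite mulnC divnK // pdiv_dvd.
apply: (IH (D %/ pdiv D)%N).
- rewrite -ltnS; apply: leq_trans DN; exact: ltn_Pdiv pg D0.
- by rewrite divn_gt0 ?prime_gt0 // pdiv_leq.
- by move: hD; rewrite {1}DE natrM (vM hv) vq1 mul1r.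
Qed.

Lemma small_prime D : (0 < D)%N -> v D%:R < 1 -> exists q, prime q /\ v q%:R < 1.
Proof. exact: (small_prime_aux (leqnn D)). Qed.

Lemma G_pow n (G : 'M[K]_n -> Prop) g m : is_subgroup_SL G -> G g -> G (mxpow g m).
Proof.
case=> G1 _ GM _ Gg; elim: m => [|m IH] //=.
by rewrite /mxpow /=; apply: GM.
Qed.

End Main.

Unset Implicit Arguments.

Theorem proposition1p4 (R : realType) (K : fieldType) (v : K -> R)
  (n : nat) (G : 'M[K]_n -> Prop) :
  nonarch_local_field v ->
  is_subgroup_SL G ->
  ((forall p : nat, p \notin [pchar K]) \/
   (exists p : nat, p \in [pchar K] /\ ~ (exists g, G g /\ has_order g p))) ->
  (mx_discrete v G <->
   (forall g, G g -> mx_discrete v (cyclic_sub g))).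
Proof.
move=> hv hG hchar.
have hG' := hG; case: hG' => G1 Gdet GM GV.
have Gcyc : forall g x, G g -> cyclic_sub g x -> G x.
  move=> g x Gg [m [->|->]]; apply: (G_pow _ hG) => //; exact: GV.
split.
  move=> Hd g Gg x cx; have [e e0 He] := Hd x (Gcyc _ _ Gg cx).
  by exists e => // h ch; apply: He; apply: (Gcyc g).
move=> Hc.
have [p [pp [vp1 hp]]] : exists p, prime p /\ v p%:R < 1 /\
    (0 < v p%:R \/ ~ (exists g, G g /\ has_order g p)).
  case: hchar => [h0|[p [pc hno]]].
    have [D [D0 vD]] := small_nat hv.
    have [q [pq vq]] := small_prime hv D0 vD.
    exists q; split => //; split => //; left.
    rewrite lt_def (v_ge0 hv) andbT; apply/eqP => /(v_eq0 hv) /eqP q0.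
    have [r rc] := natf0_pchar (prime_gt0 pq) q0.
    by move: (h0 r); rewrite rc.
  exists p; split; first exact: pcharf_prime pc.
  by split; [rewrite (pcharf0 pc) (v0 hv) | right].
case: p pp vp1 hp => [|[|p]] //= pp vp1 hp.
set c := Num.max (v p.+2%:R) 0.
have [d [d0 [d1 dp]]] : exists d : R, 0 < d /\ d < 1 /\ (0 < v p.+2%:R -> d < v p.+2%:R).
  have [vp0|vp0] := ltP 0 (v p.+2%:R).
    exists (v p.+2%:R / 2); split; first by rewrite divr_gt0.
    split; first by lra.
    by move=> _; lra.
  exists (1 / 2); split; first by lra.
  by split; [lra| move=> h; lra].
set cc := Num.max (v p.+2%:R) d.
have cc0 : 0 <= cc by rewrite le_max (v_ge0 hv).
have cc1 : cc < 1 by rewrite gt_max vp1 d1.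
have iso : forall h, G h -> nm v (h - 1) < d -> h = 1.
  move=> h Gh hd.
  have [//|hn1] := eqVneq h 1.
  exfalso.
  have [e e0 He] := Hc h Gh 1%:M (ex_intro _ 0%N (or_introl erefl)).
  have [k ck] := geom cc0 cc1 e0.
  have rd : nm v (h - 1) <= d by apply: ltW.
  have hk := iterate hv p rd (ltW d1) k.
  have hk1 : h ^+ (p.+2 ^ k) = 1.
    rewrite -mxpowE; apply: He; first by exists (p.+2 ^ k)%N; left.
    move=> i j; rewrite mxpowE.
    have := nm_ub v (h ^+ (p.+2 ^ k) - 1) i j; rewrite !mxE => h1.
    apply: le_lt_trans h1 _; apply: le_lt_trans hk _.
    apply: le_lt_trans ck; rewrite ler_piMr ?exprn_ge0 //.
    exact: le_trans (ltW d1).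
  have [j hj] := order_p pp hk1 (elimN eqP hn1).
  have Gh' : G (h ^+ (p.+2 ^ j)) by rewrite -mxpowE; apply: (G_pow _ hG).
  have h'1 : h ^+ (p.+2 ^ j) <> 1.
    by case: hj => _ /(_ 1%N (isT : (0 < 1 < p.+2)%N)); rewrite mxpowE expr1.
  case: hp => [vp0|hno]; last by apply: hno; exists (h ^+ (p.+2 ^ j)).
  apply: h'1; apply: (torsion hv vp0).
    apply: le_lt_trans (pow_near hv _ _) _; first exact: le_trans (ltW d1).
    exact: lt_trans (dp vp0).
  by case: hj => /[swap] _; rewrite mxpowE.
move=> g0 Gg0.
have g0u : g0 \in unitmx by rewrite unitmxE (Gdet _ Gg0) unitr1.
set M := Num.max 1 (nm v (invmx g0)).
have M0 : 0 < M by rewrite lt_max ltr01.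
exists (d / M); first by rewrite divr_gt0.
move=> h Gh hl.
have hn : nm v (h - g0) < d / M.
  by apply: nm_lt; [rewrite divr_gt0 | move=> i j; rewrite !mxE].
have Gx : G (invmx g0 *m h) by apply: GM => //; apply: GV.
have x1 : invmx g0 *m h = 1.
  apply: iso => //.
  have -> : invmx g0 *m h - 1 = invmx g0 * (h - g0).
    by rewrite mulrBr -!mulmxE mulVmx.
  apply: le_lt_trans (nmM hv _ _) _.
  apply: (@le_lt_trans _ _ (M * nm v (h - g0))).
    by rewrite ler_wpM2r ?(nm_ge0 hv) // le_max lexx orbT.
  by rewrite -ltr_pdivlMl // mulrC.
by rewrite -[h]mul1mx -(mulmxV g0u) -mulmxA x1 mulmx1.
Qed.
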